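(* Let $(X,d)$ be a compact metric space and $f\colon X\to X$ continuous. If $f$ has the limit shadowing property around $CR(f)$, then $f$ has the limit shadowing property.
   Context: A limit pseudo orbit is a sequence $(x_i)_{i\ge0}$ with $\lim_i d(f(x_i),x_{i+1})=0$. $f$ has the limit shadowing property around $S\subset X$ if every limit pseudo orbit contained in $S$ admits $y\in X$ with $\lim_i d(x_i,f^i(y))=0$; $f$ has the limit shadowing property if this holds with $S=X$. $CR(f)$ is the set of chain recurrent points: $x$ such that for every $\delta>0$ there is a finite sequence $x=z_0,\dots,z_k=x$ ($k\ge1$) with $d(f(z_i),z_{i+1})\le\delta$ for $0\le i<k$. *)

(* Defs.v *)
From Stdlib Require Import Reals.
Open Scope R_scope.

Record MetricSpace := {
  M :> Type;
  dist : M -> M -> R;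
  dist_nonneg : forall x y, 0 <= dist x y;
  dist_eq0 : forall x y, dist x y = 0 <-> x = y;
  dist_symm : forall x y, dist x y = dist y x;
  dist_triangle : forall x y z, dist x z <= dist x y + dist y z
}.

Arguments dist {m} _ _.

Definition open_set {X : MetricSpace} (U : X -> Prop) : Prop :=
  forall x, U x -> exists eps, 0 < eps /\ forall y, dist x y < eps -> U y.

Definition compact_space (X : MetricSpace) : Prop :=
  forall (I : Type) (U : I -> X -> Prop),
    (forall i, open_set (U i)) ->
    (forall x, exists i, U i x) ->
    exists l : list I, forall x, exists i, List.In i l /\ U i x.

Definition continuous_map {X : MetricSpace} (f : X -> X) : Prop :=
  forall x eps, 0 < eps -> exists delta, 0 < delta /\
    forall y, dist x y < delta -> dist (f x) (f y) < eps.

Definition tends_to_zero (u : nat -> R) : Prop :=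
  forall eps, 0 < eps -> exists N, forall n, (n >= N)%nat -> Rabs (u n) < eps.

Definition limit_pseudo_orbit {X : MetricSpace} (f : X -> X) (x : nat -> X) : Prop :=
  tends_to_zero (fun i => dist (f (x i)) (x (S i))).

Fixpoint iter {X : Type} (f : X -> X) (n : nat) (y : X) : X :=
  match n with O => y | S k => f (iter f k y) end.

Definition limit_shadowing_around {X : MetricSpace} (f : X -> X) (S : X -> Prop) : Prop :=
  forall x : nat -> X, limit_pseudo_orbit f x -> (forall i, S (x i)) ->
    exists y : X, tends_to_zero (fun i => dist (x i) (iter f i y)).

Definition limit_shadowing {X : MetricSpace} (f : X -> X) : Prop :=
  limit_shadowing_around f (fun _ => True).

Definition chain_recurrent {X : MetricSpace} (f : X -> X) (x : X) : Prop :=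
  forall delta, 0 < delta -> exists (k : nat) (z : nat -> X),
    (k >= 1)%nat /\ z O = x /\ z k = x /\
    forall i, (i < k)%nat -> dist (f (z i)) (z (S i)) <= delta.

(* Main.v *)
Require Import Defs.
From Stdlib Require Import Reals.
From Stdlib Require Import Lra Lia Classical ClassicalEpsilon List.
Open Scope R_scope.
Local Notation dist := Defs.dist.

Lemma Rabs_dist (X : MetricSpace) (x y : X) : Rabs (dist x y) = dist x y.
Proof. apply Rabs_pos_eq, dist_nonneg. Qed.

Lemma dist0 (X : MetricSpace) (x : X) : dist x x = 0.
Proof. apply (proj2 (dist_eq0 X x x)); reflexivity. Qed.

Lemma tz_sum3 (u1 u2 u3 w : nat -> R) :
  tends_to_zero u1 -> tends_to_zero u2 -> tends_to_zero u3 ->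
  (forall n, Rabs (w n) <= Rabs (u1 n) + Rabs (u2 n) + Rabs (u3 n)) ->
  tends_to_zero w.
Proof.
  intros H1 H2 H3 Hw eps He.
  destruct (H1 (eps/3)) as [N1 HN1]; [lra|].
  destruct (H2 (eps/3)) as [N2 HN2]; [lra|].
  destruct (H3 (eps/3)) as [N3 HN3]; [lra|].
  exists (Nat.max N1 (Nat.max N2 N3)). intros n Hn.
  specialize (HN1 n ltac:(lia)). specialize (HN2 n ltac:(lia)).
  specialize (HN3 n ltac:(lia)). specialize (Hw n). lra.
Qed.

Lemma tz_zero : tends_to_zero (fun _ => 0).
Proof. intros eps He. exists 0%nat. intros. rewrite Rabs_R0. lra. Qed.

Lemma tz_shift (u : nat -> R) : tends_to_zero u -> tends_to_zero (fun n => u (S n)).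
Proof. intros H eps He. destruct (H eps He) as [N HN]. exists N. intros n Hn. apply HN. lia. Qed.

Lemma fold_max {A : Type} (g : A -> nat) (l : list A) :
  forall i, In i l -> (g i <= fold_right (fun a acc => Nat.max (g a) acc) 0%nat l)%nat.
Proof.
  induction l as [|a l IH]; simpl; intros i Hi; [contradiction|].
  destruct Hi as [<-|Hi]; [lia|]. specialize (IH i Hi). lia.
Qed.

Lemma cluster (X : MetricSpace) (P : nat -> Prop) (s : nat -> X) :
  compact_space X -> (forall M, exists n, (n >= M)%nat /\ P n) ->
  exists p : X, forall r, 0 < r -> forall M, exists n, (n >= M)%nat /\ P n /\ dist p (s n) < r.
Proof.
  intros HC HP. apply NNPP; intro Hn.
  assert (Hq : forall p : X, exists r M, 0 < r /\ forall n, (n >= M)%nat -> P n -> r <= dist p (s n)).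
  { intro p. apply NNPP; intro H1. apply Hn. exists p. intros r Hr M.
    apply NNPP; intro H2. apply H1. exists r, M. split; [exact Hr|].
    intros n HnM HPn. apply Rnot_lt_le. intro Hlt. apply H2. exists n. auto. }
  destruct (HC (X * R * nat)%type (fun i q => 0 < snd (fst i) /\
     (forall n, (n >= snd i)%nat -> P n -> snd (fst i) <= dist (fst (fst i)) (s n)) /\
     dist (fst (fst i)) q < snd (fst i))) as [l Hl].
  - intros [[p r] M] q [Hr [HM Hd]]. simpl in *. exists (r - dist p q). split; [lra|].
    intros y Hy. simpl. split; [exact Hr|]. split; [exact HM|].
    pose proof (dist_triangle X p q y). lra.
  - intro q. destruct (Hq q) as [r [M [Hr HM]]]. exists (q, r, M). simpl.
    split; [|split]; auto. rewrite dist0; lra.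
  - destruct (HP (fold_right (fun (a : X*R*nat) acc => Nat.max (snd a) acc) 0%nat l)) as [n [HnM HPn]].
    destruct (Hl (s n)) as [[[p r] M] [Hin HU]]. simpl in HU. destruct HU as [Hr [HM Hd]].
    pose proof (fold_max (fun a : X*R*nat => snd a) l _ Hin) as Hle. simpl in Hle.
    specialize (HM n ltac:(lia) HPn). lra.
Qed.

Lemma cluster_CR (X : MetricSpace) (f : X -> X) (x : nat -> X) (p : X) :
  continuous_map f -> limit_pseudo_orbit f x ->
  (forall r, 0 < r -> forall M, exists n, (n >= M)%nat /\ dist p (x n) < r) ->
  chain_recurrent f p.
Proof.
  intros Hc Hl Hp delta Hd.
  destruct (Hc p (delta/2)) as [eta [He Heta]]; [lra|].
  destruct (Hl (delta/2)) as [N1 HN1]; [lra|].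
  assert (Hr : 0 < Rmin eta (delta/2)) by (apply Rmin_glb_lt; lra).
  pose proof (Rmin_l eta (delta/2)). pose proof (Rmin_r eta (delta/2)).
  destruct (Hp _ Hr N1) as [n1 [Hn1 Hd1]].
  destruct (Hp _ Hr (n1+2)%nat) as [n2 [Hn2 Hd2]].
  exists (n2 - n1)%nat, (fun j => if Nat.eqb j 0 then p else if Nat.eqb j (n2-n1) then p else x (n1 + j)%nat).
  split; [lia|]. split; [reflexivity|].
  split; [ rewrite Nat.eqb_refl; destruct (Nat.eqb (n2-n1) 0); reflexivity |].
  intros i Hi. cbv beta.
  destruct (Nat.eqb_spec i 0); destruct (Nat.eqb_spec i (n2-n1));
    destruct (Nat.eqb_spec (S i) (n2-n1)); destruct (Nat.eqb_spec (S i) 0); try lia.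
  - subst i. pose proof (HN1 n1 Hn1) as HH. simpl in HH. rewrite Rabs_dist in HH.
    replace (n1 + 1)%nat with (S n1) by lia.
    pose proof (Heta (x n1) ltac:(lra)).
    pose proof (dist_triangle X (f p) (f (x n1)) (x (S n1))). lra.
  - pose proof (HN1 (n1 + i)%nat ltac:(lia)) as HH. simpl in HH. rewrite Rabs_dist in HH.
    replace (S (n1 + i)) with n2 in HH by lia.
    pose proof (dist_triangle X (f (x (n1+i)%nat)) (x n2) p).
    rewrite (dist_symm X (x n2) p) in H1. lra.
  - pose proof (HN1 (n1 + i)%nat ltac:(lia)) as HH. simpl in HH. rewrite Rabs_dist in HH.
    replace (n1 + S i)%nat with (S (n1 + i)) by lia. lra.
Qed.

Lemma ucont (X : MetricSpace) (f : X -> X) (a b : nat -> X) :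
  compact_space X -> continuous_map f ->
  tends_to_zero (fun n => dist (a n) (b n)) ->
  tends_to_zero (fun n => dist (f (a n)) (f (b n))).
Proof.
  intros HC Hc Hab eps He. apply NNPP; intro H.
  assert (HP: forall M, exists n, (n>=M)%nat /\ eps <= dist (f (a n)) (f (b n))).
  { intro M; apply NNPP; intro H1; apply H; exists M; intros n Hn.
    rewrite Rabs_dist. apply Rnot_le_lt; intro; apply H1; exists n; auto. }
  destruct (cluster X _ a HC HP) as [p Hp].
  destruct (Hc p (eps/2)) as [eta [Heta Hpe]]; [lra|].
  destruct (Hab (eta/2)) as [N HN]; [lra|].
  destruct (Hp (eta/2) ltac:(lra) N) as [n [HnN [HPn Hd]]].
  specialize (HN n HnN). rewrite Rabs_dist in HN.
  assert (H0 : dist p (b n) < eta) by (pose proof (dist_triangle X p (a n) (b n)); lra).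
  pose proof (Hpe (a n) ltac:(lra)). pose proof (Hpe (b n) H0).
  pose proof (dist_triangle X (f (a n)) (f p) (f (b n))).
  rewrite (dist_symm X (f (a n)) (f p)) in H3. lra.
Qed.

Fixpoint srch (g : nat -> bool) (j : nat) : nat :=
  match j with O => O | S j' => if g j then j else srch g j' end.

Lemma srch_spec g j0 j : g j0 = true -> (j0 <= j)%nat ->
  (j0 <= srch g j)%nat /\ g (srch g j) = true.
Proof.
  intros Hg. induction j as [|j IH]; intros Hle.
  - simpl. assert (j0 = 0%nat) by lia. subst. auto.
  - simpl. destruct (g (S j)) eqn:E.
    + split; auto.
    + assert (j0 <> S j) by (intro; subst; congruence). apply IH. lia.
Qed.

Theorem lemma3p4 (X : MetricSpace) (f : X -> X) :
  compact_space X -> continuous_map f ->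
  limit_shadowing_around f (chain_recurrent f) ->
  limit_shadowing f.
Proof.
  intros HC Hc Hsh x Hx _.
  assert (A : forall eps, 0 < eps -> exists N, forall n, (n >= N)%nat ->
            exists z, chain_recurrent f z /\ dist (x n) z < eps).
  { intros eps He. apply NNPP; intro H.
    assert (HP : forall M, exists n, (n >= M)%nat /\
               forall z, chain_recurrent f z -> eps <= dist (x n) z).
    { intro M. apply NNPP; intro H1. apply H. exists M. intros n Hn.
      apply NNPP; intro H2. apply H1. exists n. split; auto.
      intros z Hz. apply Rnot_lt_le; intro. apply H2. exists z; auto. }
    destruct (cluster X _ x HC HP) as [p Hp].
    assert (Hcr : chain_recurrent f p).
    { apply (cluster_CR X f x p Hc Hx). intros r Hr M.
      destruct (Hp r Hr M) as [n [? [? ?]]]. exists n; auto. }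
    destruct (Hp eps He 0%nat) as [n [_ [HPn Hd]]]. specialize (HPn p Hcr).
    rewrite dist_symm in HPn. lra. }
  destruct (A 1 Rlt_0_1) as [N0 HN0].
  destruct (HN0 N0 (le_n _)) as [c0 [Hc0 _]].
  set (G := fun n j => exists z, chain_recurrent f z /\ dist (x n) z < / (INR j + 1)).
  set (g := fun n j => if excluded_middle_informative (G n j) then true else false).
  assert (Hg : forall n j, g n j = true <-> G n j).
  { intros n j. unfold g. destruct (excluded_middle_informative (G n j)); split; auto; try discriminate; intro; contradiction. }
  set (K := fun n => srch (g n) n).
  set (z := fun n => epsilon (inhabits c0) (fun w => chain_recurrent f w /\
            (G n (K n) -> dist (x n) w < / (INR (K n) + 1)))).
  assert (Hz : forall n, chain_recurrent f (z n) /\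
            (G n (K n) -> dist (x n) (z n) < / (INR (K n) + 1))).
  { intro n. unfold z. apply epsilon_spec.
    destruct (classic (G n (K n))) as [[w [Hw1 Hw2]] | Hn].
    - exists w; auto.
    - exists c0; split; auto; intro; contradiction. }
  assert (Hxz : tends_to_zero (fun n => dist (x n) (z n))).
  { intros eps He. destruct (archimed_cor1 eps He) as [j [Hj Hj0]].
    assert (Hpos : 0 < / (INR j + 1)).
    { apply Rinv_0_lt_compat. pose proof (pos_INR j). lra. }
    destruct (A _ Hpos) as [Nj HNj]. exists (Nat.max Nj j). intros n Hn.
    rewrite Rabs_dist.
    assert (Gj : g n j = true) by (apply Hg; apply HNj; lia).
    destruct (srch_spec (g n) j n Gj ltac:(lia)) as [Hle HgK].
    apply Hg in HgK. destruct (Hz n) as [_ Hd]. specialize (Hd HgK).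
    fold (K n) in Hle.
    assert (/ (INR (K n) + 1) <= / (INR j + 1)).
    { apply Rinv_le_contravar. pose proof (pos_INR j). lra.
      apply le_INR in Hle. lra. }
    assert (/ (INR j + 1) <= / INR j).
    { apply Rinv_le_contravar. apply lt_0_INR; lia. lra. }
    lra. }
  assert (Hlpo : limit_pseudo_orbit f z).
  { unfold limit_pseudo_orbit.
    apply (tz_sum3 (fun n => dist (f (x n)) (f (z n))) (fun n => dist (f (x n)) (x (S n)))
             (fun n => dist (x (S n)) (z (S n)))).
    - apply ucont; auto.
    - exact Hx.
    - apply (tz_shift (fun n => dist (x n) (z n))). exact Hxz.
    - intro n. rewrite !Rabs_dist.
      pose proof (dist_triangle X (f (z n)) (f (x n)) (x (S n))).
      pose proof (dist_triangle X (f (z n)) (x (S n)) (z (S n))).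
      rewrite (dist_symm X (f (z n)) (f (x n))) in H. lra. }
  destruct (Hsh z Hlpo (fun i => proj1 (Hz i))) as [y Hy].
  exists y.
  apply (tz_sum3 (fun n => dist (x n) (z n)) (fun n => dist (z n) (iter f n y)) (fun _ => 0)); auto.
  - apply tz_zero.
  - intro n. rewrite !Rabs_dist, Rabs_R0.
    pose proof (dist_triangle X (x n) (z n) (iter f n y)). lra.
Qed.
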